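(* Let $G$ be a connected nontrivial graph with $m$ vertices and let $n\geq4$. Then $$\lambda'(G\boxtimes K_n)=\min\{n^2\lambda(G),\ (n-1)(m+2e(G)),\ 2n\delta(G)+2n-4\}.$$
   Context: All graphs are finite, simple and undirected; ''nontrivial'' means having at least two vertices. $K_n$ denotes the complete graph on $n$ vertices. For a graph $G$: $e(G)=|E(G)|$; $\delta(G)$ is the minimum degree; $\lambda(G)$ is the edge-connectivity. A restricted edge-cut of a connected graph $G$ is a set $S\subseteq E(G)$ such that $G-S$ is disconnected and every component of $G-S$ has at least $2$ vertices; the restricted edge-connectivity $\lambda'(G)$ is the minimum cardinality of a restricted edge-cut. The strong product $G\boxtimes H$ has vertex set $V(G)\times V(H)$, with $(x_1,y_1)$ and $(x_2,y_2)$ adjacent iff either $x_1=x_2$ and $y_1y_2\in E(H)$, or $y_1=y_2$ and $x_1x_2\in E(G)$, or $x_1x_2\in E(G)$ and $y_1y_2\in E(H)$. *)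

(* Defs.v *)
From mathcomp Require Import all_boot.
Set Implicit Arguments. Unset Strict Implicit. Unset Printing Implicit Defensive.

(* A simple graph on a finite vertex type T is a symmetric irreflexive
   relation e : rel T.  Edges are 2-element vertex sets [set x; y]. *)
Section Graphs.
Variables (T : finType) (e : rel T).

Definition edges : {set {set T}} := [set [set x; y] | x in [set: T], y in [set: T] & e x y].
Definition num_edges : nat := #|edges|.

Definition deg (x : T) : nat := #|[set y | e x y]|.
(* minimum degree delta(G) (the default #|T| is never attained for T nonempty) *)
Definition min_deg : nat := \big[minn/#|T|]_(x : T) deg x.

Definition gconnected : Prop := forall x y : T, connect e x y.

Definition remove_edges (S : {set {set T}}) : rel T :=
  fun x y => e x y && ([set x; y] \notin S).

Definition is_edge_cut (S : {set {set T}}) : bool :=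
  (S \subset edges) && [exists x, exists y, ~~ connect (remove_edges S) x y].

Definition component (S : {set {set T}}) (x : T) : {set T} :=
  [set y | connect (remove_edges S) x y].

Definition is_restricted_edge_cut (S : {set {set T}}) : bool :=
  is_edge_cut S && [forall x, 1 < #|component S x|].

(* minima over cuts; cuts are subsets of edges, so the default #|edges| is a top *)
Definition edge_conn : nat :=
  \big[minn/#|edges|]_(S | is_edge_cut S) #|S|.
Definition restricted_edge_conn : nat :=
  \big[minn/#|edges|]_(S | is_restricted_edge_cut S) #|S|.
End Graphs.

Definition strong_prod (T1 T2 : finType) (e1 : rel T1) (e2 : rel T2) : rel (T1 * T2) :=
  fun u v => [|| (u.1 == v.1) && e2 u.2 v.2,
                 (u.2 == v.2) && e1 u.1 v.1
               | e1 u.1 v.1 && e2 u.2 v.2].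

Definition complete_graph (n : nat) : rel 'I_n := fun x y => x != y.
Arguments complete_graph n : clear implicits.

(* Main.v *)
Require Import Defs.
From mathcomp Require Import all_boot zify.
Set Implicit Arguments. Unset Strict Implicit. Unset Printing Implicit Defensive.

Lemma bigmin_le_seq (I : eqType) (s : seq I) (P : pred I) (F : I -> nat) D i :
  i \in s -> P i -> \big[minn/D]_(j <- s | P j) F j <= F i.
Proof.
elim: s => //= j s IH; rewrite inE big_cons => /orP[/eqP<- ->|hs Pi].
  exact: geq_minl.
case: (P j); last exact: IH.
exact: leq_trans (geq_minr _ _) (IH hs Pi).
Qed.

Lemma bigmin_le (I : finType) (P : pred I) (F : I -> nat) D i :
  P i -> \big[minn/D]_(j | P j) F j <= F i.
Proof. by apply: bigmin_le_seq; rewrite mem_index_enum. Qed.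

Lemma le_bigmin (I : finType) (P : pred I) (F : I -> nat) D b :
  b <= D -> (forall i, P i -> b <= F i) -> b <= \big[minn/D]_(j | P j) F j.
Proof.
move=> hD hF; elim/big_ind: _ => // x y hx hy.
by rewrite leq_min hx hy.
Qed.

Lemma card_sumb (I : finType) (A : {set I}) : #|A| = \sum_i (i \in A : nat).
Proof. by rewrite -sum1_card big_mkcond; apply: eq_bigr => i _; case: (i \in A). Qed.

Lemma sum_pair (I J : finType) (F : I * J -> nat) :
  \sum_p F p = \sum_i \sum_j F (i, j).
Proof. by rewrite pair_bigA; apply: eq_bigr; case. Qed.

Section General.
Variables (V : finType) (r : rel V).

Definition cutpairs (X : {set V}) : {set V * V} :=
  [set p | [&& p.1 \in X, p.2 \notin X & r p.1 p.2]].

Definition cutedges (X : {set V}) : {set {set V}} :=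
  [set [set p.1; p.2] | p in cutpairs X].

Lemma pair_inj (X : {set V}) a b c d :
  a \in X -> b \notin X -> c \in X -> d \notin X ->
  [set a; b] = [set c; d] -> a = c /\ b = d.
Proof.
move=> aX bX cX dX E.
have ha : a \in [set c; d] by rewrite -E !inE eqxx.
have hb : b \in [set c; d] by rewrite -E !inE eqxx orbT.
move: ha hb; rewrite !inE => /orP[/eqP->|/eqP ad] /orP[/eqP bc|/eqP->] //.
- by move: bX; rewrite bc cX.
- by move: aX; rewrite ad (negbTE dX).
- by move: aX; rewrite ad (negbTE dX).
Qed.

Lemma connect_out (S : {set {set V}}) (X : {set V}) a b :
  (forall x y, x \in X -> y \notin X -> r x y -> [set x; y] \in S) ->
  connect (remove_edges r S) a b -> a \in X -> b \in X.
Proof.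
move=> H /connectP[p pth ->]; elim: p a pth => //= c p IH a /andP[rac pth] aX.
apply: IH pth _; apply/negPn/negP => cX.
by move: rac; rewrite /remove_edges => /andP[rac]; rewrite (H a c aX cX rac).
Qed.

Lemma cutpairs_le (S : {set {set V}}) u :
  #|cutpairs (component r S u)| <= #|S|.
Proof.
set X := component r S u.
rewrite -(card_in_imset (f := fun p : V * V => [set p.1; p.2])).
  apply: subset_leq_card; apply/subsetP => E /imsetP[p].
  rewrite !inE => /and3P[p1X p2X rp] ->.
  apply/negPn/negP => nS; move/negP: p2X; apply.
  apply: connect_trans p1X _; apply: connect1.
  by rewrite /remove_edges rp nS.
move=> p q; rewrite !inE => /and3P[p1 p2 _] /and3P[q1 q2 _] E.
have p1' : p.1 \in X by rewrite inE.
have p2' : p.2 \notin X by rewrite inE.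
have q1' : q.1 \in X by rewrite inE.
have q2' : q.2 \notin X by rewrite inE.
have [h1 h2] := pair_inj p1' p2' q1' q2' E.
by move: h1 h2; case: p {p1 p2 p1' p2' E} => ? ?; case: q {q1 q2 q1' q2'} => ? ? /= -> ->.
Qed.

Lemma cutedges_sub (X : {set V}) : cutedges X \subset edges r.
Proof.
apply/subsetP => E /imsetP[p]; rewrite !inE => /and3P[_ _ rp] ->.
by apply/imset2P; exists p.1 p.2; rewrite ?inE.
Qed.

Lemma cutedges_in (X : {set V}) x y : x \in X -> y \notin X -> r x y -> [set x; y] \in cutedges X.
Proof. by move=> xX yX rxy; apply/imsetP; exists (x, y); rewrite // !inE xX yX rxy. Qed.

Lemma cutedges_edge_cut (X : {set V}) a b : a \in X -> b \notin X -> is_edge_cut r (cutedges X).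
Proof.
move=> aX bX; rewrite /is_edge_cut cutedges_sub /=.
apply/existsP; exists a; apply/existsP; exists b; apply/negP => C.
by move: bX; rewrite (connect_out (@cutedges_in X) C aX).
Qed.

Lemma edge_conn_le (X : {set V}) a b : a \in X -> b \notin X -> edge_conn r <= #|cutpairs X|.
Proof.
move=> aX bX; apply: leq_trans (leq_imset_card _ _).
exact: bigmin_le (cutedges_edge_cut aX bX).
Qed.

Lemma cutedges_restricted (X : {set V}) a b :
  a \in X -> b \notin X ->
  (forall x, exists2 c, c != x & r x c && ((c \in X) == (x \in X))) ->
  is_restricted_edge_cut r (cutedges X).
Proof.
move=> aX bX hn; rewrite /is_restricted_edge_cut (cutedges_edge_cut aX bX) /=.
apply/forallP => x; have [c cx /andP[rxc /eqP cX]] := hn x.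
apply/card_gt1P; exists x, c; split; rewrite ?inE ?connect0 // 1?eq_sym //.
apply: connect1; rewrite /remove_edges rxc /=.
apply/negP => /imsetP[p]; rewrite !inE => /and3P[p1 p2 _] E.
have h1 : p.1 \in [set x; c] by rewrite E !inE eqxx.
have h2 : p.2 \in [set x; c] by rewrite E !inE eqxx orbT.
move: h1 h2; rewrite !inE => /orP[]/eqP e1 /orP[]/eqP e2; move: p1 p2;
  rewrite e1 e2 ?cX => -> //.
Qed.

Lemma restricted_le (X : {set V}) a b :
  a \in X -> b \notin X ->
  (forall x, exists2 c, c != x & r x c && ((c \in X) == (x \in X))) ->
  restricted_edge_conn r <= #|cutpairs X|.
Proof.
move=> aX bX hn; apply: leq_trans (leq_imset_card _ _).
exact: bigmin_le (cutedges_restricted aX bX hn).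
Qed.

Lemma remove_sym (S : {set {set V}}) : symmetric r -> symmetric (remove_edges r S).
Proof. by move=> rs x y; rewrite /remove_edges rs setUC. Qed.

Lemma rc_structure (S : {set {set V}}) :
  symmetric r -> irreflexive r -> is_restricted_edge_cut r S ->
  exists X : {set V}, [/\ #|cutpairs X| <= #|S|, exists a, a \in X, exists b, b \notin X &
    forall x, exists2 c, c != x & r x c && ((c \in X) == (x \in X))].
Proof.
move=> rsym rirr /andP[/andP[_ /existsP[u /existsP[v nuv]]] /forallP hc].
exists (component r S u); split.
- exact: cutpairs_le.
- by exists u; rewrite inE connect0.
- by exists v; rewrite inE.
move=> x; have /card_gt1P[y1 [y2 [h1 h2 ne]]] := hc x.
have [c' cx' conn'] : exists2 c', c' != x & connect (remove_edges r S) x c'.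
  case: (eqVneq y1 x) => [e1|n1]; last by exists y1; move: h1; rewrite // inE.
  by exists y2; [rewrite -e1 eq_sym | move: h2; rewrite inE].
move/connectP: conn' => [[|c p] /= pth lst]; first by rewrite lst eqxx in cx'.
move/andP: pth => [rxc _]; have rxc' := rxc; move/andP: rxc' => [rxc' _].
exists c.
  by apply/negP => /eqP E; move: rxc'; rewrite E rirr.
rewrite rxc' /=; apply/eqP; rewrite !inE.
have cs := sym_connect_sym (remove_sym S rsym).
apply/idP/idP => h.
  by apply: connect_trans h _; rewrite cs; apply: connect1.
by apply: connect_trans h (connect1 rxc).
Qed.

End General.


Section Count.
Variables (T : finType) (e : rel T) (n : nat).
Hypothesis ei : irreflexive e.

Definition HH := strong_prod e (complete_graph n).

Definition sX (X : {set T * 'I_n}) (x : T) := #|[set i | (x, i) \in X]|.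

Definition fval (r : rel T) (s : T -> nat) :=
  \sum_x s x * (n - s x) + \sum_x \sum_(y | r x y) s x * (n - s y).

Lemma Hsimp x i y j : HH (x, i) (y, j) = ((x == y) && (i != j)) || e x y.
Proof.
rewrite /HH /strong_prod /complete_graph /=.
case: (eqVneq x y) => [<-|nxy]; first by rewrite ei /= !andbF !orbF.
by case: (e x y); case: (i == j).
Qed.

Lemma sum_in (X : {set T * 'I_n}) y : \sum_j ((y, j) \in X : nat) = sX X y.
Proof. by rewrite /sX (card_sumb [set i | (y, i) \in X]); apply: eq_bigr => j _; rewrite inE. Qed.

Lemma sum_notin (X : {set T * 'I_n}) y : \sum_j ((y, j) \notin X : nat) = n - sX X y.
Proof.
have h := cardsC [set j | (y, j) \in X]; rewrite card_ord in h.
have h2 : \sum_j ((y, j) \notin X : nat) = #|~: [set j | (y, j) \in X]|.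
  by rewrite card_sumb; apply: eq_bigr => j _; rewrite !inE.
rewrite h2 /sX; lia.
Qed.

Lemma sum_eq1 (F : T -> nat) x : \sum_y (y == x) * F y = F x.
Proof.
rewrite (bigD1 x) //= eqxx mul1n big1 ?addn0 // => y /negbTE ->; exact: mul0n.
Qed.

Lemma sum_cond (P : pred T) (F : T -> nat) : \sum_y P y * F y = \sum_(y | P y) F y.
Proof. by rewrite [RHS]big_mkcond; apply: eq_bigr => y _; case: (P y); rewrite ?mul1n ?mul0n. Qed.

Lemma card_cutpairsH (X : {set T * 'I_n}) : #|cutpairs HH X| = fval e (sX X).
Proof.
rewrite card_sumb sum_pair sum_pair.
have step : forall x i, \sum_b ((((x, i), b) \in cutpairs HH X) : nat) =
   ((x, i) \in X) * ((n - sX X x) + \sum_(y | e x y) (n - sX X y)).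
  move=> x i; case: (boolP ((x, i) \in X)) => xi; last first.
    by rewrite mul0n big1 // => b _; rewrite inE (negbTE xi).
  rewrite /= mul1n sum_pair.
  transitivity (\sum_y ((y == x) * (n - sX X y) + e x y * (n - sX X y)));
    last by rewrite big_split /= sum_eq1 sum_cond.
  apply: eq_bigr => y _; rewrite -sum_notin big_distrr big_distrr -big_split /=.
  apply: eq_bigr => j _; rewrite inE /= xi Hsimp /=.
  case: (eqVneq y x) => [->|nyx]; first rewrite ei /= orbF mul1n mul0n addn0.
    case: (boolP ((x, j) \in X)) => xj //=.
    by case: (eqVneq i j) => // eij; move: xj; rewrite -eij xi.
  rewrite /=.
  by case: (e x y); case: ((y, j) \in X).
rewrite (eq_bigr (fun x => sX X x * ((n - sX X x) + \sum_(y | e x y) (n - sX X y)))); last first.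
  move=> x _; rewrite (eq_bigr _ (fun i _ => step x i)) -big_distrl /=.
  by rewrite sum_in.
rewrite /fval -big_split /=; apply: eq_bigr => x _.
by rewrite mulnDr big_distrr.
Qed.

End Count.


Section Fval.
Variables (T : finType) (n : nat).

Definition rmA (r : rel T) (A : {set T}) : rel T :=
  fun x y => [&& r x y, x \notin A & y \notin A].
Definition gg (s : T -> nat) x y := s x * (n - s y) + s y * (n - s x).

Lemma sum2_cond (r : rel T) (F : T -> T -> nat) :
  \sum_x \sum_(y | r x y) F x y = \sum_x \sum_y r x y * F x y.
Proof. by apply: eq_bigr => x _; rewrite sum_cond. Qed.

Lemma fval_rm (r : rel T) (s : T -> nat) (A : {set T}) :
  symmetric r -> (forall x y, x \in A -> y \in A -> ~~ r x y) ->
  fval n r s = fval n (rmA r A) s + \sum_(x in A) \sum_(y | r x y) gg s x y.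
Proof.
move=> rs indA; rewrite /fval -addnA; congr (_ + _).
set h := fun x y => s x * (n - s y).
have E1 : \sum_(x in A) \sum_(y | r x y) gg s x y =
   \sum_x \sum_y ((x \in A) && r x y) * (h x y + h y x).
  rewrite big_mkcond /=; apply: eq_bigr => x _.
  case: (x \in A) => /=; last by rewrite big1.
  by rewrite sum_cond; apply: eq_bigr => y _; rewrite /gg /h.
have E2 : \sum_x \sum_y ((x \in A) && r x y) * (h x y + h y x) =
   \sum_x \sum_y ((x \in A) && r x y) * h x y +
   \sum_x \sum_y ((y \in A) && r x y) * h x y.
  rewrite [X in _ + X](_ : _ = \sum_x \sum_y ((x \in A) && r x y) * h y x).
    rewrite -big_split /=; apply: eq_bigr => x _.
    by rewrite -big_split /=; apply: eq_bigr => y _; rewrite mulnDr.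
  rewrite [LHS]exchange_big; apply: eq_bigr => x _; apply: eq_bigr => y _.
  by rewrite (rs x y).
rewrite E1 E2 (sum2_cond r) (sum2_cond (rmA r A)) -!big_split; apply: eq_bigr => x _.
rewrite -!big_split; apply: eq_bigr => y _.
rewrite /rmA /h /=.
case: (boolP (x \in A)) => xA; case: (boolP (y \in A)) => yA; case rxy: (r x y);
  rewrite /= ?mul1n ?mul0n ?add0n ?addn0 //.
by move: (indA x y xA yA); rewrite rxy.
Qed.

End Fval.


Section Core.
Variables (T : finType) (e : rel T) (n : nat).
Hypotheses (es : symmetric e) (ei : irreflexive e).

Lemma fval_diag (r : rel T) (s : T -> nat) (A : {set T}) :
  \sum_(x in A) s x * (n - s x) <= fval n r s.
Proof.
rewrite /fval; apply: leq_trans (leq_addr _ _).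
rewrite [X in X <= _]big_mkcond; apply: leq_sum => x _; by case: (x \in A).
Qed.

Lemma rmA_sym (r : rel T) (A : {set T}) : symmetric r -> symmetric (rmA r A).
Proof. by move=> rs a b; rewrite /rmA rs; case: (a \in A); case: (b \in A); rewrite ?andbF. Qed.

Lemma rmA_irr (r : rel T) (A : {set T}) : irreflexive r -> irreflexive (rmA r A).
Proof. by move=> ri a; rewrite /rmA ri. Qed.

Lemma indep1 (r : rel T) x : irreflexive r -> forall a b, a \in [set x] -> b \in [set x] -> ~~ r a b.
Proof. by move=> ri a b; rewrite !inE => /eqP-> /eqP->; rewrite ri. Qed.

Lemma Ebound (s : T -> nat) x :
  s x * (n - s x) + \sum_(y | e x y) gg n s x y <= fval n e s.
Proof.
rewrite (fval_rm n s es (@indep1 e x ei)) big_set1.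
apply: leq_add => //.
by have := fval_diag (rmA e [set x]) s [set x]; rewrite big_set1.
Qed.

Lemma Pbound (s : T -> nat) x z : e x z ->
  s x * (n - s x) + s z * (n - s z) + \sum_(y | e x y) gg n s x y +
  \sum_(y | rmA e [set x] z y) gg n s z y <= fval n e s.
Proof.
move=> exz; have xz : x != z by apply/negP => /eqP E; move: exz; rewrite E ei.
rewrite (fval_rm n s es (@indep1 e x ei)) big_set1.
set e1 := rmA e [set x].
rewrite (fval_rm n s (@rmA_sym e [set x] es) (@indep1 _ z (@rmA_irr e [set x] ei))) big_set1.
have := fval_diag (rmA e1 [set z]) s [set x; z].
rewrite big_setU1 ?inE // big_set1 => h.
have h' : s x * (n - s x) + s z * (n - s z) <= fval n (rmA e1 [set z]) s by exact: h.
move: h'; rewrite /e1; set F := fval _ _ _; lia.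
Qed.

Lemma sum_ge (P : pred T) (F : T -> nat) c :
  (forall y, P y -> c <= F y) -> #|[set y | P y]| * c <= \sum_(y | P y) F y.
Proof.
move=> h; rewrite -sum_nat_const big_mkcond [X in _ <= X]big_mkcond.
by apply: leq_sum => y _; rewrite inE; case: (boolP (P y)) => // /h.
Qed.

Lemma card_del (x z : T) : e x z ->
  #|[set y | e x y && (y != z)]| = (deg e x).-1.
Proof.
move=> exz; rewrite /deg (cardsD1 z [set y | e x y]) inE exz add1n /=.
by apply: eq_card => y; rewrite !inE andbC.
Qed.

Lemma card_rm (x z : T) : e x z ->
  #|[set y | rmA e [set x] z y]| = (deg e z).-1.
Proof.
move=> exz; have xz : z != x by apply/negP => /eqP E; move: exz; rewrite E ei.
rewrite -(card_del (z:=x)) ?(es z x) //; apply: eq_card => y.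
by rewrite !inE /rmA !inE xz.
Qed.

Lemma Edeg (s : T -> nat) x c :
  (forall y, e x y -> c <= gg n s x y) -> s x * (n - s x) + deg e x * c <= fval n e s.
Proof.
move=> h; apply: leq_trans (Ebound s x); rewrite leq_add2l.
exact: sum_ge.
Qed.

End Core.


Section Cases.
Variables (T : finType) (e : rel T) (n : nat).
Hypotheses (es : symmetric e) (ei : irreflexive e) (n4 : 4 <= n).
Hypothesis dpos : forall x, 0 < deg e x.

Lemma mdle x : min_deg e <= deg e x.
Proof. exact: bigmin_le. Qed.

Local Notation D := (2 * n * min_deg e + 2 * n - 4).

Lemma ar_mid a b : 2 <= a -> a <= n - 2 -> b <= n -> 2 * n <= a * (n - b) + b * (n - a).
Proof.
move=> h1 h2 h3.
have u1 : 2 * (n - b) <= a * (n - b) by apply: leq_mul.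
have u2 : b * 2 <= b * (n - a) by apply: leq_mul => //; lia.
lia.
Qed.

Lemma L_mid (s : T -> nat) x : (forall y, s y <= n) -> 2 <= s x -> s x <= n - 2 ->
  D <= fval n e s.
Proof.
move=> sn h1 h2; apply: leq_trans (Edeg es ei (n := n) (x := x) (s := s) (c := 2 * n) _); last first.
  by move=> y _; apply: ar_mid.
have := mdle x; set d := deg e x; set m := min_deg e.
have u : 2 * (n - 2) <= s x * (n - s x).
  have u3 : 2 * (n - s x) <= s x * (n - s x) by apply: leq_mul.
  have u4 : (s x - 2) * (n - 2 - s x) >= 0 by [].
  nia.
nia.
Qed.

Lemma ar_one a b : 0 < a -> a < n -> b <= n -> n <= a * (n - b) + b * (n - a).
Proof.
move=> h1 h2 h3.
have u1 : 1 * (n - b) <= a * (n - b) by apply: leq_mul.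
have u2 : b * 1 <= b * (n - a) by apply: leq_mul => //; lia.
lia.
Qed.

Lemma uv2 u v : 2 <= u -> 2 <= v -> 2 * (u + v) - 4 <= u * v.
Proof.
case: u => [|[|u]] // _; case: v => [|[|v]] // _.
rewrite !mulSn !mulnS; lia.
Qed.

Lemma ar_pair a t : 0 < a -> a < n -> 0 < t -> t < n ->
  4 * n - 4 <= a * (n - a) + t * (n - t) + (a * (n - t) + t * (n - a)).
Proof.
move=> h1 h2 h3 h4.
have E : a * (n - a) + t * (n - t) + (a * (n - t) + t * (n - a)) = (a + t) * ((n - a) + (n - t)).
  rewrite mulnDl !mulnDr; lia.
rewrite E; have := @uv2 (a + t) ((n - a) + (n - t)).
lia.
Qed.

Lemma L_pair (s : T -> nat) x z : (forall y, s y <= n) -> e x z ->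
  0 < s x -> s x < n -> 0 < s z -> s z < n -> D <= fval n e s.
Proof.
move=> sn exz h1 h2 h3 h4; apply: leq_trans (Pbound n es ei s exz).
rewrite (bigD1 z) //=.
have r1 : (deg e x).-1 * n <= \sum_(y | e x y && (y != z)) gg n s x y.
  rewrite -(card_del exz); apply: sum_ge => y _; exact: ar_one.
have r2 : (deg e z).-1 * n <= \sum_(y | rmA e [set x] z y) gg n s z y.
  rewrite -(card_rm es ei exz); apply: sum_ge => y _; exact: ar_one.
have := ar_pair h1 h2 h3 h4; have := mdle x; have := mdle z.
have := dpos x; have := dpos z.
move: r1 r2; rewrite /gg.
set S1 := \sum_(y | _) _; set S2 := \sum_(y | _) _.
set dx := deg e x; set dz := deg e z; set m := min_deg e.
move=> r1 r2 dz1 dx1 mz mx P.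
have ex : dx.-1 * n + n = dx * n by rewrite addnC -mulSn prednK.
have ez : dz.-1 * n + n = dz * n by rewrite addnC -mulSn prednK.
have fx : m * n <= dx * n by apply: leq_mul.
have fz : m * n <= dz * n by apply: leq_mul.
lia.
Qed.

Lemma L_lonely (s : T -> nat) x : s x * (n - s x) = n - 1 ->
  (forall y, e x y -> n * (n - 1) <= gg n s x y) -> D <= fval n e s.
Proof.
move=> h hy; apply: leq_trans (Edeg es ei (n := n) (x := x) (s := s) hy).
rewrite h; have := mdle x; have := dpos x.
set d := deg e x; set m := min_deg e => d1 md.
have f1 : d * (3 * n) <= d * (n * (n - 1)) by apply: leq_mul => //; nia.
have f2 : m * n <= d * n by apply: leq_mul.
have f3 : 1 * n <= d * n by apply: leq_mul.
lia.
Qed.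

End Cases.


Section PC.
Variables (T : finType) (e : rel T) (n : nat).
Hypotheses (es : symmetric e) (ei : irreflexive e) (n4 : 4 <= n).

Lemma fval_ind (r : rel T) (P : {set T}) :
  fval n r (fun x => n * (x \in P)) = n * n * #|cutpairs r P|.
Proof.
rewrite /fval big1 ?add0n; last first.
  by move=> x _; case: (x \in P); rewrite ?muln1 ?subnn ?muln0 ?mul0n.
rewrite card_sumb sum_pair big_distrr; apply: eq_bigr => x _.
rewrite -(sum_cond (r x)) big_distrr; apply: eq_bigr => y _; rewrite inE /=.
by case: (x \in P); case: (y \in P); case: (r x y);
  rewrite /= ?muln1 ?muln0 ?mul1n ?mul0n ?subn0 ?subnn ?muln0.
Qed.

Lemma Pcase (s : T -> nat) y1 w1 : (forall x, s x <= n) -> s y1 = n -> s w1 = 0 ->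
  (forall x z, e x z -> 0 < s x -> s x < n -> ~~ ((0 < s z) && (s z < n))) ->
  n ^ 2 * edge_conn e <= fval n e s.
Proof.
move=> sn hy hw indep.
pose mixed x := (0 < s x) && (s x < n).
pose M := [set x | mixed x].
pose A x := \sum_(w | e x w) s w.
pose B x := \sum_(w | e x w) (n - s w).
pose P := [set x | if mixed x then B x <= A x else s x == n].
pose t x := n * (x \in P).
have tE : forall x, x \notin M -> t x = s x.
  move=> x; rewrite /t /P /M !inE; case hm: (mixed x) => // _.
  have := sn x; case: (eqVneq (s x) n) => [-> _|ne le]; first by rewrite muln1.
  rewrite muln0; move: hm; rewrite /mixed; case: (s x) ne le => // k ne le /=.
  by rewrite ltn_neqAle ne le.
have indM : forall a b, a \in M -> b \in M -> ~~ e a b.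
  move=> a b; rewrite !inE => /andP[a1 a2] bm; apply/negP => eab.
  by move: (indep a b eab a1 a2); rewrite -/(mixed b) bm.
have le1 : fval n (rmA e M) t <= fval n (rmA e M) s.
  rewrite /fval; apply: leq_add.
    rewrite big1 // => x _; rewrite /t; case: (x \in P);
      by rewrite ?muln1 ?subnn ?muln0 ?mul0n.
  apply: eq_leq; apply: eq_bigr => x _; apply: eq_bigr => y /and3P[_ xM yM].
  by rewrite !tE.
have le2 : \sum_(x in M) \sum_(y | e x y) gg n t x y <=
           \sum_(x in M) \sum_(y | e x y) gg n s x y.
  apply: leq_sum => x xM.
  have nb : forall y, e x y -> t y = s y.
    move=> y exy; apply: tE; apply/negP => yM.
    by move: (indM x y xM yM); rewrite exy.
  rewrite (eq_bigr (fun y => t x * (n - s y) + s y * (n - t x))); last first.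
    by move=> y /nb; rewrite /gg => ->.
  rewrite big_split -big_distrr -big_distrl.
  rewrite [X in _ <= X]big_split -big_distrr -big_distrl.
  rewrite -/(A x) -/(B x).
  have xm : mixed x by move: xM; rewrite inE.
  have snx := sn x.
  have htx : t x = n * (B x <= A x) by rewrite /t /P inE xm.
  rewrite htx; case: (leqP (B x) (A x)) => hBA; rewrite ?muln1 ?muln0 ?subnn ?muln0.
    have f1 : (n - s x) * B x <= (n - s x) * A x by apply: leq_mul.
    have f2 : s x * B x + (n - s x) * B x = n * B x by rewrite -mulnDl subnKC.
    rewrite /=; lia.
  have f1 : s x * A x <= s x * B x by apply: leq_mul => //; exact: ltnW.
  have f2 : A x * s x + A x * (n - s x) = A x * n by rewrite -mulnDr subnKC.
  rewrite /= mul0n add0n subn0; lia.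
have ec : edge_conn e <= #|cutpairs e P|.
  apply: (@edge_conn_le _ e P y1 w1).
    by rewrite /P inE /mixed hy ltnn andbF eqxx.
  by rewrite /P inE /mixed hw ltnn /=; apply/eqP; lia.
have := fval_rm n s es indM; have := fval_rm n t es indM.
rewrite (fval_ind e P) => h1 h2.
have : n ^ 2 * edge_conn e <= n * n * #|cutpairs e P| by rewrite mulnn leq_mul2l ec orbT.
lia.
Qed.

End PC.


Lemma dpos_of (T : finType) (e : rel T) : gconnected e -> 1 < #|T| -> forall x, 0 < deg e x.
Proof.
move=> gc T2 x.
have [y yx _] : exists2 y, y != x & true.
  move/card_gt1P: T2 => [a [b [_ _ ab]]].
  case: (eqVneq a x) => [ax|ax]; last by exists a.
  by exists b; rewrite // -ax eq_sym.
move: (gc x y) => /connectP[[|c p] /= pth lst]; first by rewrite lst eqxx in yx.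
move/andP: pth => [exc _]; rewrite /deg; apply/card_gt0P; exists c; by rewrite inE.
Qed.

Section Core2.
Variables (T : finType) (e : rel T) (n : nat).
Hypotheses (es : symmetric e) (ei : irreflexive e) (n4 : 4 <= n).
Hypothesis dpos : forall x, 0 < deg e x.

Lemma core (s : T -> nat) : (forall x, s x <= n) -> (exists x, 0 < s x) -> (exists x, s x < n) ->
  (forall x, s x = 1 -> exists2 y, e x y & 0 < s y) ->
  (forall x, s x = n.-1 -> exists2 y, e x y & s y < n) ->
  minn (n ^ 2 * edge_conn e) (2 * n * min_deg e + 2 * n - 4) <= fval n e s.
Proof.
move=> sn [x0 hx0] [x1 hx1] iso1 iso2.
suff : (2 * n * min_deg e + 2 * n - 4 <= fval n e s) \/ (n ^ 2 * edge_conn e <= fval n e s).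
  by case => h; [apply: leq_trans (geq_minr _ _) h | apply: leq_trans (geq_minl _ _) h].
case: (boolP [exists x, (2 <= s x) && (s x <= n - 2)]) => [/existsP[x /andP[a b]]|nomid].
  by left; apply: (L_mid es ei n4 (x := x)).
case: (boolP [exists x, [exists z, [&& e x z, 0 < s x, s x < n, 0 < s z & s z < n]]]) =>
  [/existsP[x /existsP[z /and5P[a b c d f]]]|nopair].
  by left; apply: (L_pair es ei n4 dpos (x := x) (z := z)).
have mid' : forall x, 0 < s x -> s x < n -> s x = 1 \/ s x = n.-1.
  move=> x a b; move/existsPn: nomid => /(_ x); rewrite negb_and -!ltnNge.
  case/orP => h; lia.
have indep : forall x z, e x z -> 0 < s x -> s x < n -> ~~ ((0 < s z) && (s z < n)).
  move=> x z exz a b; apply/negP => /andP[c d].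
  by move/existsPn: nopair => /(_ x) /existsPn /(_ z); rewrite exz a b c d.
case: (boolP [exists y, s y == n]) => [/existsP[y1 /eqP hy1]|nofull]; last first.
  left; have x0n : s x0 < n.
    rewrite ltn_neqAle sn andbT; apply/negP => /eqP E.
    by move/existsPn: nofull => /(_ x0); rewrite E eqxx.
  have nb : forall y, e x0 y -> s y = 0.
    move=> y exy; have := indep x0 y exy hx0 x0n; have := sn y.
    move/existsPn: nofull => /(_ y) /eqP; lia.
  case: (mid' x0 hx0 x0n) => h.
    by have [y exy] := iso1 x0 h; rewrite (nb y exy).
  apply: (L_lonely es ei n4 dpos (x := x0)).
    rewrite h; have -> : n - n.-1 = 1 by lia.
    by rewrite muln1 subn1.
  by move=> y exy; rewrite /gg (nb y exy) h subn0 mul0n addn0 mulnC subn1.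
case: (boolP [exists w, s w == 0]) => [/existsP[w1 /eqP hw1]|nozero]; last first.
  left; have x1n : 0 < s x1.
    rewrite lt0n; apply/negP => /eqP E.
    by move/existsPn: nozero => /(_ x1); rewrite E eqxx.
  have nb : forall y, e x1 y -> s y = n.
    move=> y exy; have := indep x1 y exy x1n hx1; have := sn y.
    move/existsPn: nozero => /(_ y) /eqP; lia.
  case: (mid' x1 x1n hx1) => h; last first.
    by have [y exy] := iso2 x1 h; rewrite (nb y exy) ltnn.
  apply: (L_lonely es ei n4 dpos (x := x1)).
    by rewrite h mul1n subn1.
  by move=> y exy; rewrite /gg (nb y exy) h subnn muln0 add0n.
by right; apply: (Pcase es n4 (y1 := y1) (w1 := w1)).
Qed.

End Core2.


Section Final.
Variables (T : finType) (e : rel T) (n : nat).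
Hypotheses (es : symmetric e) (ei : irreflexive e) (n4 : 4 <= n).
Hypotheses (gc : gconnected e) (T2 : 1 < #|T|).

Local Notation H := (strong_prod e (complete_graph n)).
Let dpos := dpos_of gc T2.

Lemma Hs x i y j : H (x, i) (y, j) = ((x == y) && (i != j)) || e x y.
Proof. exact: (@Hsimp T e n ei). Qed.

Lemma Hsym : symmetric H.
Proof. by move=> [x i] [y j]; rewrite !Hs es eq_sym [j == i]eq_sym. Qed.

Lemma Hirr : irreflexive H.
Proof. by case=> x i; rewrite Hs !eqxx ei. Qed.

Lemma sX_le (X : {set T * 'I_n}) x : sX X x <= n.
Proof. by apply: leq_trans (max_card _) _; rewrite card_ord. Qed.

Lemma sX_compl (X : {set T * 'I_n}) x :
  #|~: [set i | (x, i) \in X]| = n - sX X x.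
Proof. have := cardsC [set i | (x, i) \in X]; rewrite card_ord /sX; lia. Qed.

Lemma sX_lt (X : {set T * 'I_n}) x j : (x, j) \notin X -> sX X x < n.
Proof.
move=> xj; have : 0 < #|~: [set i | (x, i) \in X]|.
  by apply/card_gt0P; exists j; rewrite !inE.
rewrite sX_compl; have := sX_le X x; lia.
Qed.

Lemma sX_gt (X : {set T * 'I_n}) x j : (x, j) \in X -> 0 < sX X x.
Proof. by move=> xj; apply/card_gt0P; exists j; rewrite inE. Qed.

Lemma lowerH (S : {set {set T * 'I_n}}) : is_restricted_edge_cut H S ->
  minn (n ^ 2 * edge_conn e) (2 * n * min_deg e + 2 * n - 4) <= #|S|.
Proof.
move=> rcS.
have [X [cle [[a1 a2] aX] [[b1 b2] bX] nbr]] := rc_structure Hsym Hirr rcS.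
rewrite (card_cutpairsH ei) in cle; apply: leq_trans cle.
apply: (core es ei n4 dpos).
- exact: sX_le.
- by exists a1; apply: sX_gt aX.
- by exists b1; apply: sX_lt bX.
- move=> x h; have : 0 < sX X x by rewrite h.
  move/card_gt0P => [i]; rewrite inE => xi.
  have [[y j] cne /andP[hc /eqP cX]] := nbr (x, i).
  rewrite xi in cX; move: hc; rewrite Hs; case/orP => [/andP[/eqP yx ij]|exy].
    move: h; rewrite /sX => h; have : 1 < #|[set k | (x, k) \in X]|.
      by apply/card_gt1P; exists i, j; rewrite !inE xi yx cX ij.
    by rewrite h.
  by exists y => //; apply: sX_gt cX.
- move=> x h; have : 0 < #|~: [set i | (x, i) \in X]| by rewrite sX_compl h; lia.
  move/card_gt0P => [i]; rewrite !inE => xi.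
  have [[y j] cne /andP[hc /eqP cX]] := nbr (x, i).
  rewrite (negbTE xi) in cX; move: hc; rewrite Hs; case/orP => [/andP[/eqP yx ij]|exy].
    have : 1 < #|~: [set k | (x, k) \in X]|.
      by apply/card_gt1P; exists i, j; rewrite !inE xi yx cX ij.
    by rewrite sX_compl h; lia.
  by exists y => //; apply: (@sX_lt X y j); rewrite cX.
Qed.

Lemma o0 : 0 < n. Proof. lia. Qed.
Lemma o1 : 1 < n. Proof. lia. Qed.
Lemma o2 : 2 < n. Proof. lia. Qed.
Lemma o3 : 3 < n. Proof. lia. Qed.
Definition i0 : 'I_n := Ordinal o0.
Definition i1 : 'I_n := Ordinal o1.
Definition i2 : 'I_n := Ordinal o2.
Definition i3 : 'I_n := Ordinal o3.

Lemma Hsame y j k : H (y, j) (y, k) = (j != k).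
Proof. by rewrite Hs eqxx ei orbF. Qed.

Lemma fval_ext (r : rel T) (s t : T -> nat) : (forall x, s x = t x) -> fval n r s = fval n r t.
Proof.
move=> h; rewrite /fval; congr (_ + _); apply: eq_bigr => x _; rewrite ?h //.
by apply: eq_bigr => y _; rewrite !h.
Qed.

Lemma pair_ne (y : T) (j k : 'I_n) : k != j -> (y, k) != (y, j).
Proof. by move=> kj; rewrite xpair_eqE eqxx. Qed.

Lemma up1 (S0 : {set {set T}}) : is_edge_cut e S0 -> restricted_edge_conn H <= n ^ 2 * #|S0|.
Proof.
move=> /andP[_ /existsP[u /existsP[v nuv]]].
set A := component e S0 u.
set X1 := [set p : T * 'I_n | p.1 \in A].
pose oth (j : 'I_n) := if j == i0 then i1 else i0.
have oth_ne : forall j, oth j != j.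
  move=> j; rewrite /oth; case: (eqVneq j i0) => [->|ne]; last by rewrite eq_sym.
  by rewrite -val_eqE.
have h : restricted_edge_conn H <= #|cutpairs H X1|.
  apply: (@restricted_le _ H X1 (u, i0) (v, i0)); first by rewrite !inE connect0.
    by rewrite !inE.
  move=> [y k]; exists (y, oth k); first by rewrite xpair_eqE eqxx (negbTE (oth_ne k)).
  by rewrite Hsame eq_sym oth_ne !inE /= eqxx.
apply: leq_trans h _.
rewrite (card_cutpairsH ei) (@fval_ext _ _ (fun y => n * (y \in A))).
  by rewrite fval_ind mulnn leq_mul2l cutpairs_le orbT.
move=> y; rewrite /sX; case: (boolP (y \in A)) => yA.
  rewrite muln1; transitivity #|'I_n|; last exact: card_ord.
  by apply: eq_card => i; rewrite !inE /=; move: yA; rewrite inE.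
rewrite muln0; apply/eqP; rewrite cards_eq0; apply/eqP/setP => i.
by move: yA; rewrite !inE /= => /negbTE ->.
Qed.

Lemma edges_cut : is_edge_cut e (edges e).
Proof.
rewrite /is_edge_cut subxx /=.
move/card_gt1P: T2 => [x [y [_ _ xy]]].
apply/existsP; exists x; apply/existsP; exists y; apply/negP.
move/connectP => [[|c p] /= pth lst]; first by rewrite lst eqxx in xy.
move/andP: pth => [/andP[exc]]; rewrite /remove_edges.
suff -> : [set x; c] \in edges e by [].
by apply/imset2P; exists x c; rewrite ?inE.
Qed.

Lemma up1' : restricted_edge_conn H <= n ^ 2 * edge_conn e.
Proof.
rewrite /edge_conn; apply: (big_ind (fun m => restricted_edge_conn H <= n ^ 2 * m)).
- exact: up1 edges_cut.
- by move=> x y hx hy; case: (leqP x y).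
- move=> S0 hS0; exact: up1.
Qed.

Lemma degT x : deg e x < #|T|.
Proof.
have := cardsC [set y | e x y].
have : 0 < #|~: [set y | e x y]| by apply/card_gt0P; exists x; rewrite !inE ei.
rewrite /deg; lia.
Qed.

Lemma mindeg_attained : exists x0, deg e x0 = min_deg e.
Proof.
have [x1 _ _] : exists2 x : T, true & true.
  by move/card_gt1P: T2 => [a [b _]]; exists a.
have K : (#|T| <= min_deg e) \/ exists x, deg e x = min_deg e.
  rewrite /min_deg; apply: (big_ind (fun m => (#|T| <= m) \/ exists x, deg e x = m)).
  - by left.
  - by move=> a b ha hb; case: (leqP a b).
  - by move=> x _; right; exists x.
case: K => // h; have := degT x1; have := @bigmin_le _ xpredT (deg e) #|T| x1 isT.
rewrite -/(min_deg e); lia.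
Qed.

Lemma numE x : deg e x <= num_edges e.
Proof.
rewrite /num_edges /deg -(card_in_imset (f := fun y => [set x; y]) (D := [set y | e x y])).
  apply: subset_leq_card; apply/subsetP => E /imsetP[y]; rewrite inE => exy ->.
  by apply/imset2P; exists x y; rewrite ?inE.
move=> y y'; rewrite !inE => h1 h2 E.
have : y \in [set x; y'] by rewrite -E !inE eqxx orbT.
rewrite !inE => /orP[/eqP yx|/eqP //]; move: h1; by rewrite yx ei.
Qed.

Lemma sum_const_pred (P : pred T) c : \sum_(y | P y) c = #|[set y | P y]| * c.
Proof. by rewrite -sum_nat_const; apply: eq_bigl => y; rewrite inE. Qed.

Section X2.
Variable x0 : T.
Definition X2 : {set T * 'I_n} := [set (x0, i0); (x0, i1)].

Definition kf (b : bool) (k : 'I_n) : 'I_n :=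
  if b then (if k == i0 then i1 else if k == i1 then i0 else if k == i2 then i3 else i2)
  else (if k == i0 then i1 else i0).

Lemma kf_ne b k : kf b k != k.
Proof.
rewrite /kf; case: b; case: k => m hm; rewrite /i0 /i1 /i2 /i3 -!val_eqE /=;
  by case: m hm => [|[|[|[|m]]]] hm.
Qed.

Lemma kf_mem k : (kf true k == i0) || (kf true k == i1) = (k == i0) || (k == i1).
Proof.
rewrite /kf; case: k => m hm; rewrite /i0 /i1 /i2 /i3 -!val_eqE /=;
  by case: m hm => [|[|[|[|m]]]] hm.
Qed.

Lemma X2nbr : forall x, exists2 c, c != x & H x c && ((c \in X2) == (x \in X2)).
Proof.
move=> [y k]; exists (y, kf (y == x0) k); first by rewrite xpair_eqE eqxx kf_ne.
rewrite Hsame eq_sym kf_ne /= /X2 !inE !xpair_eqE.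
case: (eqVneq y x0) => [_|_] /=; last by [].
by apply/eqP; exact: (kf_mem k).
Qed.

Lemma X2in : (x0, i0) \in X2.
Proof. by rewrite !inE eqxx. Qed.

Lemma X2out : (x0, i2) \notin X2.
Proof. by rewrite !inE !xpair_eqE eqxx /=. Qed.

Lemma sX2 y : sX X2 y = 2 * (y == x0).
Proof.
rewrite /sX; case: (eqVneq y x0) => [->|ne].
  transitivity #|[set i0; i1]|.
    by apply: eq_card => i; rewrite !inE !xpair_eqE eqxx.
  by rewrite cards2 /i0 /i1 -val_eqE.
rewrite muln0; apply/eqP; rewrite cards_eq0; apply/eqP/setP => i.
by rewrite !inE !xpair_eqE (negbTE ne).
Qed.

Lemma fvalX2 : fval n e (sX X2) = 2 * (n - 2) + deg e x0 * (2 * n).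
Proof.
rewrite (@fval_ext e (sX X2) (fun y => 2 * (y == x0)) sX2).
have A1 : \sum_x 2 * (x == x0) * (n - 2 * (x == x0)) = 2 * (n - 2).
  rewrite (eq_bigr (fun x => (x == x0) * (2 * (n - 2)))) ?sum_eq1 //.
  by move=> x _; case: (x == x0); rewrite ?muln1 ?mul1n ?muln0 ?mul0n.
have A2 : \sum_x \sum_(y | e x y) 2 * (x == x0) * (n - 2 * (y == x0)) = deg e x0 * (2 * n).
  rewrite (eq_bigr (fun x => (x == x0) * \sum_(y | e x y) 2 * (n - 2 * (y == x0)))); last first.
    move=> x _; case: (x == x0); rewrite ?mul1n ?muln1 //.
    by rewrite mul0n; apply: big1 => y _; rewrite muln0 mul0n.
  rewrite sum_eq1 (eq_bigr (fun _ => 2 * n)); first by rewrite sum_const_pred.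
  move=> y exy; have : y != x0 by apply/negP => /eqP E; move: exy; rewrite E ei.
  by move/negbTE ->; rewrite muln0 subn0.
by rewrite /fval A1 A2.
Qed.

End X2.

Lemma up2 : restricted_edge_conn H <= 2 * n * min_deg e + 2 * n - 4.
Proof.
have [x0 hx0] := mindeg_attained.
have h : restricted_edge_conn H <= #|cutpairs H (X2 x0)|.
  exact: (restricted_le (X2in x0) (X2out x0) (X2nbr x0)).
apply: leq_trans h _; rewrite (card_cutpairsH ei) fvalX2 hx0.
lia.
Qed.

Lemma final_eq : restricted_edge_conn H =
  minn (minn (n ^ 2 * edge_conn e) ((n - 1) * (#|T| + 2 * num_edges e)))
       (2 * n * min_deg e + 2 * n - 4).
Proof.
have u1 := up1'; have u2 := up2.
have [x0 hx0] := mindeg_attained.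
have lo : minn (n ^ 2 * edge_conn e) (2 * n * min_deg e + 2 * n - 4) <= restricted_edge_conn H.
  apply: le_bigmin; last by move=> S hS; exact: lowerH.
  have rc := cutedges_restricted (X2in x0) (X2out x0) (X2nbr x0).
  apply: leq_trans (lowerH rc) _.
  by apply: subset_leq_card; apply: cutedges_sub.
have mid : 2 * n * min_deg e + 2 * n - 4 <= (n - 1) * (#|T| + 2 * num_edges e).
  rewrite -hx0; have := degT x0; have := numE x0; have := dpos x0.
  set d := deg e x0; set m := #|T|; set E := num_edges e => d1 dE dm.
  have f : (n - 1) * (3 * d + 1) <= (n - 1) * (m + 2 * E) by apply: leq_mul => //; lia.
  have g : 2 * n * d + 2 * n - 4 <= (n - 1) * (3 * d + 1) by nia.
  lia.
lia.
Qed.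

End Final.

Theorem theorem3p7 (T : finType) (e : rel T) (n : nat) :
  symmetric e -> irreflexive e -> gconnected e -> 1 < #|T| -> 4 <= n ->
  restricted_edge_conn (strong_prod e (complete_graph n)) =
  minn (minn (n ^ 2 * edge_conn e) ((n - 1) * (#|T| + 2 * num_edges e)))
       (2 * n * min_deg e + 2 * n - 4).
Proof. by move=> es ei gc T2 n4; apply: final_eq. Qed.
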